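(* Let $G$ be a connected groupoid with finite object set $G_0=\{e_1,\dots,e_r\}$, $A=\bigoplus_{i=1}^r A_i$ a unital ring with $A_i:=A_{e_i}\neq 0$ for all $i$, and $\alpha=(A_g,\alpha_g)_{g\in G}$ a unital global action of $G$ on $A$. If $A\subset A\star_\alpha G$ is a separable extension, then $G$ is finite.
   Context: A groupoid $G$ is a small category in which every morphism is invertible; $G_0$ is its object set (objects identified with identity morphisms), $s,t$ source and target; $gh$ is defined iff $s(g)=t(h)$; $G(e,f)$ is the set of morphisms from $e$ to $f$; $G$ is connected if $G(e,f)\neq\emptyset$ for all $e,f\in G_0$. A unital partial action of $G$ on $A$ is a family $\alpha=(A_g,\alpha_g)_{g\in G}$ where $A_{t(g)}$ is a two-sided ideal of $A$, $A_g=A1_g$ is a two-sided ideal of $A_{t(g)}$ with $1_g$ a central idempotent of $A$, $\alpha_g:A_{g^{-1}}\to A_g$ a ring isomorphism, such that $\alpha_e=\mathrm{id}_{A_e}$ for $e\in G_0$, $\alpha_h^{-1}(A_{g^{-1}}\cap A_h)\subseteq A_{(gh)^{-1}}$ and $\alpha_g(\alpha_h(x))=\alpha_{gh}(x)$ for $x\in\alpha_h^{-1}(A_{g^{-1}}\cap A_h)$, whenever $s(g)=t(h)$. It is global if $\alpha_g\alpha_h=\alpha_{gh}$ for all composable $g,h$; equivalently $A_g=A_{t(g)}$ for all $g\in G$. The (partial) skew groupoid ring $A\star_\alpha G=\bigoplus_{g\in G}A_g\delta_g$ has multiplication $(a_g\delta_g)(b_h\delta_h)=\alpha_g(\alpha_{g^{-1}}(a_g)b_h)\delta_{gh}$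 if $s(g)=t(h)$ and $0$ otherwise; it is unital with $1=\sum_{e\in G_0}1_e\delta_e$, and $A$ is regarded as a subring via $a\mapsto\sum_{e\in G_0}(a1_e)\delta_e$. A ring extension $R\subseteq S$ is separable if the multiplication map $S\otimes_R S\to S$ splits as a map of $(S,S)$-bimodules; equivalently there exists $x\in S\otimes_R S$ with $m(x)=1_S$ and $sx=xs$ for all $s\in S$. *)

(* Defs.v *)
From HB Require Import structures.
From mathcomp Require Import all_boot all_order all_algebra.
Set Implicit Arguments. Unset Strict Implicit. Unset Printing Implicit Defensive.
Import GRing.Theory.
Local Open Scope ring_scope.

Record groupoid := Groupoid {
  mor : eqType;
  obj : finType;
  src : mor -> obj;
  tgt : mor -> obj;
  idm : obj -> mor;
  comp : mor -> mor -> mor;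
  inv : mor -> mor;
  src_idm : forall e, src (idm e) = e;
  tgt_idm : forall e, tgt (idm e) = e;
  src_comp : forall g h, src g = tgt h -> src (comp g h) = src h;
  tgt_comp : forall g h, src g = tgt h -> tgt (comp g h) = tgt g;
  compA : forall g h k, src g = tgt h -> src h = tgt k ->
            comp g (comp h k) = comp (comp g h) k;
  comp_idl : forall g, comp (idm (tgt g)) g = g;
  comp_idr : forall g, comp g (idm (src g)) = g;
  src_inv : forall g, src (inv g) = tgt g;
  tgt_inv : forall g, tgt (inv g) = src g;
  comp_invr : forall g, comp g (inv g) = idm (tgt g);
  comp_invl : forall g, comp (inv g) g = idm (src g)
}.

Definition connected (G : groupoid) : Prop :=
  forall e f : obj G, exists g : mor G, src g = e /\ tgt g = f.

Definition finite_groupoid (G : groupoid) : Prop :=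
  exists s : seq (mor G), forall g : mor G, g \in s.

Definition inI (R : pzRingType) (u a : R) : Prop := exists b : R, a = b * u.

Section Action.
Variables (G : groupoid) (R : pzRingType).
(* one g = 1_g (so A_g = A 1_g), alpha g = alpha_g : A_{g^-1} -> A_g *)
Variables (one : mor G -> R) (alpha : mor G -> R -> R).

Record unital_partial_action : Prop := {
  one_idem : forall g, one g * one g = one g;
  one_central : forall g a, one g * a = a * one g;
  Ag_sub : forall g a, inI (one g) a -> inI (one (idm (tgt g))) a;
  alpha_into : forall g x, inI (one (inv g)) x -> inI (one g) (alpha g x);
  alpha_add : forall g x y, inI (one (inv g)) x -> inI (one (inv g)) y ->
      alpha g (x + y) = alpha g x + alpha g y;
  alpha_mul : forall g x y, inI (one (inv g)) x -> inI (one (inv g)) y ->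
      alpha g (x * y) = alpha g x * alpha g y;
  alpha_inj : forall g x y, inI (one (inv g)) x -> inI (one (inv g)) y ->
      alpha g x = alpha g y -> x = y;
  alpha_surj : forall g y, inI (one g) y ->
      exists x, inI (one (inv g)) x /\ alpha g x = y;
  alpha_id : forall e x, inI (one (idm e)) x -> alpha (idm e) x = x;
  alpha_comp : forall g h x, src g = tgt h ->
      inI (one (inv h)) x -> inI (one (inv g)) (alpha h x) ->
      inI (one (inv (comp g h))) x /\ alpha g (alpha h x) = alpha (comp g h) x
}.

Definition global_action : Prop :=
  unital_partial_action /\
  forall g a, inI (one g) a <-> inI (one (idm (tgt g))) a.

Definition direct_sum_decomp : Prop :=
  (forall a : R, exists f : obj G -> R,
      (forall e, inI (one (idm e)) (f e)) /\ a = \sum_(e : obj G) f e) /\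
  (forall f f' : obj G -> R,
      (forall e, inI (one (idm e)) (f e)) -> (forall e, inI (one (idm e)) (f' e)) ->
      \sum_(e : obj G) f e = \sum_(e : obj G) f' e -> forall e, f e = f' e).

(* Elements of the skew groupoid ring A *_alpha G, as finite formal sums:
   the list [(g_1,a_1);...;(g_n,a_n)] stands for sum_k (a_k 1_{g_k}) delta_{g_k}. *)
Definition skew := seq (mor G * R).

Definition coefS (x : skew) (g : mor G) : R :=
  \sum_(p <- x | p.1 == g) p.2 * one g.

Definition eqS (x y : skew) : Prop := forall g, coefS x g = coefS y g.

(* (a d_g)(b d_h) = alpha_g(alpha_{g^-1}(a) b) d_{gh} if s(g)=t(h), 0 otherwise *)
Definition mulS (x y : skew) : skew :=
  flatten [seq [seq (comp p.1 q.1,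
                     alpha p.1 (alpha (inv p.1) (p.2 * one p.1) * (q.2 * one q.1)))
               | q <- y & src p.1 == tgt q.1] | p <- x].

Definition oneS : skew := [seq (idm e, 1) | e <- enum (obj G)].

Definition embA (r : R) : skew := [seq (idm e, r * one (idm e)) | e <- enum (obj G)].

(* Tensor product (A *_alpha G) (x)_A (A *_alpha G): a formal sum
   [(x_1,y_1);...] stands for sum_i x_i (x) y_i; equality is defined through
   the universal property (equal images under every A-balanced biadditive map
   into every abelian group).  A biadditive map on S x S is given by its
   restrictions F g a h b = f(a d_g, b d_h) to homogeneous components. *)
Definition tensor := seq (skew * skew).

Definition evalS2 (M : zmodType) (F : mor G -> R -> mor G -> R -> M) (x y : skew) : M :=
  \sum_(p <- x) \sum_(q <- y) F p.1 (p.2 * one p.1) q.1 (q.2 * one q.1).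

Definition balanced (M : zmodType) (F : mor G -> R -> mor G -> R -> M) : Prop :=
  (forall g h a a' b, F g (a + a') h b = F g a h b + F g a' h b) /\
  (forall g h a b b', F g a h (b + b') = F g a h b + F g a h b') /\
  (forall (r : R) (x y : skew), evalS2 F (mulS x (embA r)) y = evalS2 F x (mulS (embA r) y)).

Definition evalT (M : zmodType) (F : mor G -> R -> mor G -> R -> M) (t : tensor) : M :=
  \sum_(p <- t) evalS2 F p.1 p.2.

Definition eqT (t t' : tensor) : Prop :=
  forall (M : zmodType) (F : mor G -> R -> mor G -> R -> M),
    balanced F -> evalT F t = evalT F t'.

Definition multT (t : tensor) : skew := flatten [seq mulS p.1 p.2 | p <- t].

Definition separable_ext : Prop :=
  exists t : tensor,
    eqS (multT t) oneS /\
    forall s : skew,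
      eqT [seq (mulS s p.1, p.2) | p <- t] [seq (p.1, mulS p.2 s) | p <- t].

End Action.

(* Main.v *)
Require Import Defs.
From HB Require Import structures.
From mathcomp Require Import all_boot all_order all_algebra.
Set Implicit Arguments. Unset Strict Implicit. Unset Printing Implicit Defensive.
Import GRing.Theory.
Local Open Scope ring_scope.
Notation inv := Defs.inv.
Notation comp := Defs.comp.

Lemma inv_inv (G : groupoid) (g : mor G) : inv (inv g) = g.
Proof.
set x := inv (inv g).
have sx : src x = src g by rewrite /x src_inv tgt_inv.
rewrite -[x]comp_idr sx -comp_invl Defs.compA; last first.
- by rewrite src_inv.
- by rewrite sx tgt_inv.
by rewrite /x comp_invl src_inv comp_idl.
Qed.

Lemma inv_idm (G : groupoid) (e : obj G) : inv (idm e) = idm e.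
Proof.
have := comp_idl (inv (idm e)); rewrite tgt_inv src_idm => <-.
by rewrite comp_invr tgt_idm.
Qed.

Lemma comp_cancel (G : groupoid) (k g : mor G) :
  src k = tgt g -> comp (inv k) (comp k g) = g.
Proof.
move=> h; rewrite Defs.compA ?src_inv //; by rewrite comp_invl h comp_idl.
Qed.

Lemma comp_inj (G : groupoid) (k g g' : mor G) :
  src k = tgt g -> src k = tgt g' -> (comp k g == comp k g') = (g == g').
Proof.
move=> h1 h2; apply/eqP/eqP => [E|->] //.
by rewrite -(comp_cancel h1) E comp_cancel.
Qed.

Lemma comp_inv_r (G : groupoid) (k g : mor G) :
  src k = tgt g -> comp (comp k g) (inv g) = k.
Proof.
move=> h; rewrite -Defs.compA ?tgt_inv //.
by rewrite comp_invr -h comp_idr.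
Qed.

Lemma inv_uniq (G : groupoid) (x y : mor G) :
  src x = tgt y -> comp x y = idm (tgt x) -> y = inv x.
Proof.
move=> h e.
rewrite -[y]comp_idl -h -comp_invl -Defs.compA; last first.
- by [].
- by rewrite src_inv.
by rewrite e -src_inv comp_idr.
Qed.

Lemma inv_comp (G : groupoid) (k g : mor G) :
  src k = tgt g -> inv (comp k g) = comp (inv g) (inv k).
Proof.
move=> h.
have s1 : src (inv g) = tgt (inv k) by rewrite src_inv tgt_inv.
symmetry; apply: inv_uniq.
- by rewrite src_comp // tgt_comp // tgt_inv.
rewrite Defs.compA; last 2 first.
- by rewrite src_comp // tgt_inv.
- by rewrite src_inv tgt_inv.
by rewrite comp_inv_r // comp_invr tgt_comp.
Qed.

Lemma inIP (R : pzRingType) (u a : R) : u * u = u -> (inI u a <-> a * u = a).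
Proof.
move=> uu; split=> [[b ->]|<-]; last by exists a.
by rewrite -mulrA uu.
Qed.

Lemma one_t (G : groupoid) (R : pzRingType) (one : mor G -> R) (alpha : mor G -> R -> R)
  (P : global_action one alpha) (g : mor G) : one g = one (idm (tgt g)).
Proof.
case: P => [[oi oc _ _ _ _ _ _ _ _] Pg].
have h1 : inI (one (idm (tgt g))) (one g) by apply/(Pg g); exists 1; rewrite mul1r.
have h2 : inI (one g) (one (idm (tgt g))) by apply/(Pg g); exists 1; rewrite mul1r.
move/(inIP _ (oi _)): h1 => h1; move/(inIP _ (oi _)): h2 => h2.
by rewrite -h1 oc h2.
Qed.

Lemma one_inv (G : groupoid) (R : pzRingType) (one : mor G -> R) (alpha : mor G -> R -> R)
  (P : global_action one alpha) (g : mor G) : one (inv g) = one (idm (src g)).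
Proof. by rewrite (one_t P) tgt_inv. Qed.

Lemma alpha0 (G : groupoid) (R : pzRingType) (one : mor G -> R) (alpha : mor G -> R -> R)
  (P : global_action one alpha) (g : mor G) : alpha g 0 = 0.
Proof.
case: P => [[oi oc _ _ aD _ _ _ _ _] _].
have z : inI (one (inv g)) 0 by exists 0; rewrite mul0r.
have E := aD g 0 0 z z; rewrite addr0 in E.
by apply: (addrI (alpha g 0)); rewrite addr0 -E.
Qed.

Lemma inI_of (R : pzRingType) (u x : R) : x * u = x -> inI u x.
Proof. by move=> h; exists x. Qed.

Lemma of_inI (R : pzRingType) (u x : R) : u * u = u -> inI u x -> x * u = x.
Proof. by move=> uu /(inIP _ uu). Qed.


Lemma alpha_in (G : groupoid) (R : pzRingType) (one : mor G -> R) (alpha : mor G -> R -> R)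
  (P : global_action one alpha) (g : mor G) x :
  x * one (inv g) = x -> alpha g x * one g = alpha g x.
Proof.
case: P => [[oi oc _ ai _ _ _ _ _ _] _] h.
by apply: of_inI => //; apply: ai; apply: inI_of.
Qed.

Lemma alphaD (G : groupoid) (R : pzRingType) (one : mor G -> R) (alpha : mor G -> R -> R)
  (P : global_action one alpha) (g : mor G) x y :
  x * one (inv g) = x -> y * one (inv g) = y -> alpha g (x + y) = alpha g x + alpha g y.
Proof.
case: P => [[oi oc _ ai aD _ _ _ _ _] _] h1 h2.
by apply: aD; apply: inI_of.
Qed.

Lemma alphaM (G : groupoid) (R : pzRingType) (one : mor G -> R) (alpha : mor G -> R -> R)
  (P : global_action one alpha) (g : mor G) x y :
  x * one (inv g) = x -> y * one (inv g) = y -> alpha g (x * y) = alpha g x * alpha g y.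
Proof.
case: P => [[oi oc _ ai aD aM _ _ _ _] _] h1 h2.
by apply: aM; apply: inI_of.
Qed.

Lemma alpha_idE (G : groupoid) (R : pzRingType) (one : mor G -> R) (alpha : mor G -> R -> R)
  (P : global_action one alpha) (e : obj G) x :
  x * one (idm e) = x -> alpha (idm e) x = x.
Proof.
case: P => [[oi oc _ ai aD aM _ _ aid _] _] h1.
by apply: aid; apply: inI_of.
Qed.

Lemma alpha_compE (G : groupoid) (R : pzRingType) (one : mor G -> R) (alpha : mor G -> R -> R)
  (P : global_action one alpha) (g h : mor G) x :
  src g = tgt h -> x * one (inv h) = x -> alpha h x * one (inv g) = alpha h x ->
  alpha g (alpha h x) = alpha (comp g h) x.
Proof.
case: P => [[oi oc _ ai aD aM _ _ aid ac] _] e h1 h2.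
by case: (ac g h x e (inI_of h1) (inI_of h2)).
Qed.

Lemma alpha_inv_cancel (G : groupoid) (R : pzRingType) (one : mor G -> R) (alpha : mor G -> R -> R)
  (P : global_action one alpha) (g : mor G) x :
  x * one (inv g) = x -> alpha (inv g) (alpha g x) = x.
Proof.
move=> h.
rewrite (alpha_compE P) //; last by rewrite inv_inv (alpha_in P).
- by rewrite comp_invl (alpha_idE P) // -(one_inv P).
- by rewrite src_inv.
Qed.

Lemma alpha_one (G : groupoid) (R : pzRingType) (one : mor G -> R) (alpha : mor G -> R -> R)
  (P : global_action one alpha) (g : mor G) : alpha g (one (inv g)) = one g.
Proof.
have P' := P.
case: P' => [[oi oc _ ai aD aM _ asurj _ _] _].
have u1 : alpha g (one (inv g)) * one g = alpha g (one (inv g)) by apply: (alpha_in P); rewrite oi.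
case: (asurj g (one g)); first by exists 1; rewrite mul1r.
move=> x [/(of_inI (oi _)) hx ex].
by rewrite -ex -{1}hx (alphaM P) ?oi // ex oc u1.
Qed.

Lemma alpha_sum (G : groupoid) (R : pzRingType) (one : mor G -> R) (alpha : mor G -> R -> R)
  (P : global_action one alpha) (g : mor G) (I : Type) (s : seq I) (f : I -> R) :
  (forall i, f i * one (inv g) = f i) ->
  alpha g (\sum_(i <- s) f i) = \sum_(i <- s) alpha g (f i).
Proof.
move=> h; elim: s => [|i s IH]; first by rewrite !big_nil (alpha0 P).
rewrite !big_cons (alphaD P) ?IH //.
by rewrite big_distrl /=; apply: eq_bigr => j _; rewrite h.
Qed.

Lemma sum_in (R : pzRingType) (u : R) (I : Type) (s : seq I) (f : I -> R) :
  (forall i, f i * u = f i) -> (\sum_(i <- s) f i) * u = \sum_(i <- s) f i.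
Proof. by move=> h; rewrite big_distrl /=; apply: eq_bigr => i _; rewrite h. Qed.


Lemma sum_pred1_seq (M : zmodType) (I : eqType) (s : seq I) (i : I) (F : I -> M) :
  uniq s -> i \in s -> \sum_(j <- s | j == i) F j = F i.
Proof.
move=> us ins; rewrite big_mkcond (bigD1_seq i) //= eqxx big1 ?addr0 //.
by move=> j /negbTE ->.
Qed.

Lemma evalS2_mulS_embA (G : groupoid) (R : pzRingType) (one : mor G -> R) (alpha : mor G -> R -> R)
  (M : zmodType) (F : mor G -> R -> mor G -> R -> M) (r : R) (x y : Defs.skew G R) :
  evalS2 one F (mulS one alpha x (embA one r)) y =
  \sum_(p <- x) \sum_(q <- y)
     F (comp p.1 (idm (src p.1)))
       (alpha p.1 (alpha (inv p.1) (p.2 * one p.1) * (r * one (idm (src p.1)) * one (idm (src p.1))))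
          * one (comp p.1 (idm (src p.1))))
       q.1 (q.2 * one q.1).
Proof.
rewrite /evalS2 /mulS big_flatten big_map; apply: eq_bigr => p _.
rewrite big_map big_filter /embA big_map.
under eq_bigl do rewrite /= tgt_idm eq_sym.
by rewrite sum_pred1_seq ?enum_uniq ?mem_enum.
Qed.

Lemma evalS2_embA_mulS (G : groupoid) (R : pzRingType) (one : mor G -> R) (alpha : mor G -> R -> R)
  (M : zmodType) (F : mor G -> R -> mor G -> R -> M) (r : R) (x y : Defs.skew G R) :
  evalS2 one F x (mulS one alpha (embA one r) y) =
  \sum_(p <- x) \sum_(q <- y)
     F p.1 (p.2 * one p.1)
       (comp (idm (tgt q.1)) q.1)
       (alpha (idm (tgt q.1)) (alpha (inv (idm (tgt q.1))) (r * one (idm (tgt q.1)) * one (idm (tgt q.1))) * (q.2 * one q.1))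
          * one (comp (idm (tgt q.1)) q.1)).
Proof.
rewrite /evalS2; apply: eq_bigr => p _.
rewrite /mulS big_flatten /embA !big_map.
under eq_bigr do rewrite big_map big_filter /= src_idm.
under eq_bigr do rewrite big_mkcond.
rewrite exchange_big /=; apply: eq_bigr => q _.
rewrite -big_mkcond /= -enumT sum_pred1_seq ?enum_uniq ?mem_enum //.
Qed.

Definition Fpsi (G : groupoid) (R : pzRingType) (one : mor G -> R) (alpha : mor G -> R -> R) :
  mor G -> R -> mor G -> R -> R :=
  fun g a h b => if src g == tgt h then alpha g (alpha (inv g) (a * one g) * (b * one h)) else 0.

Definition Fsel (G : groupoid) (R : pzRingType) (M : zmodType) (g0 h0 : mor G)
  (F : mor G -> R -> mor G -> R -> M) : mor G -> R -> mor G -> R -> M :=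
  fun g a h b => if (g == g0) && (h == h0) then F g a h b else 0.

Lemma EEl (R : pzRingType) (E y : R) : E * E = E -> E * (E * y) = E * y.
Proof. by move=> h; rewrite mulrA h. Qed.

Lemma ring_id1 (R : pzRingType) (E x r b : R) : E * E = E -> (forall a, E * a = a * E) ->
  x * (r * E * E) * (b * E * E) = x * (r * E * E * (b * E) * E * E).
Proof.
by move=> EE Ec; rewrite -!mulrA !EEl // !EE.
Qed.

Lemma in_mulr (R : pzRingType) (u x y : R) : (forall a, u * a = a * u) ->
  x * u = x -> x * y * u = x * y.
Proof. by move=> c h; rewrite -mulrA -c mulrA h. Qed.

Lemma balanced_Fsel (G : groupoid) (R : pzRingType) (one : mor G -> R) (alpha : mor G -> R -> R)
  (P : global_action one alpha) (g0 h0 : mor G) :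
  balanced one alpha (Fsel g0 h0 (Fpsi one alpha)).
Proof.
have P' := P; case: P' => [[oi oc _ _ _ _ _ _ _ _] _].
have aa : forall g a, a * one g * one (inv (inv g)) = a * one g.
  by move=> g a; rewrite inv_inv -mulrA oi.
have ab : forall g a B, alpha (inv g) (a * one g) * B * one (inv g) = alpha (inv g) (a * one g) * B.
  move=> g a B; apply: in_mulr => //.
  exact: (alpha_in P (aa g a)).
split; [|split].
- move=> g h a a' b; rewrite /Fsel /Fpsi.
  case: ifP => _; last by rewrite addr0.
  case: ifP => _; last by rewrite addr0.
  by rewrite mulrDl (alphaD P) ?aa // mulrDl (alphaD P) ?ab.
- move=> g h a b b'; rewrite /Fsel /Fpsi.
  case: ifP => _; last by rewrite addr0.
  case: ifP => _; last by rewrite addr0.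
  by rewrite mulrDl mulrDr (alphaD P) ?ab.
move=> r x y; rewrite evalS2_mulS_embA evalS2_embA_mulS.
apply: eq_bigr => [[g a]] _; apply: eq_bigr => [[h b]] _ /=.
rewrite comp_idr comp_idl /Fsel /Fpsi.
case: ifP => // _; case: eqP => // e.
congr (alpha g _).
set E := one (idm (src g)).
have EE : E * E = E by rewrite oi.
have Ec : forall a, E * a = a * E by move=> z; rewrite oc.
have oh : one h = E by rewrite (one_t P) -e.
have og : one (inv g) = E by rewrite (one_inv P).
rewrite -mulrA oi (alpha_in P); last first.
  by rewrite og -!mulrA EEl // EE -og -!mulrA.
rewrite (alpha_inv_cancel P); last exact: ab.
rewrite -e -/E inv_idm.
have rE : r * E * E * E = r * E * E by rewrite -mulrA EE.
rewrite (alpha_idE P rE) (alpha_idE P); last first.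
  by rewrite oh -!mulrA EE.
rewrite -[a * one g * one g]mulrA oi oh.
exact: ring_id1.
Qed.

Lemma comp_invs (G : groupoid) (k g : mor G) : src k = tgt g ->
  comp (comp (inv g) (inv k)) k = inv g.
Proof.
move=> e; rewrite -Defs.compA; last 2 first.
- by rewrite src_inv tgt_inv.
- by rewrite src_inv.
by rewrite comp_invl e -src_inv comp_idr.
Qed.

Lemma Fsel_point (G : groupoid) (R : pzRingType) (one : mor G -> R) (alpha : mor G -> R -> R)
  (P : global_action one alpha) (k g0 h0 g h : mor G) (a B : R) :
  src k = tgt g -> src k = tgt g0 ->
  Fsel (comp k g0) h0 (Fpsi one alpha) (comp k g)
     (alpha k (alpha (inv k) (1 * one k) * (a * one g)) * one (comp k g)) h B
  = alpha k (Fsel g0 h0 (Fpsi one alpha) g (a * one g) h B).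
Proof.
move=> e e0.
have P' := P; case: P' => [[oi oc _ _ _ _ _ _ _ _] _].
rewrite /Fsel comp_inj //.
case: ifP => _; last by rewrite (alpha0 P).
rewrite /Fpsi src_comp //.
case: ifP => _; last by rewrite (alpha0 P).
have ak : alpha (inv k) (one k) = one (inv k).
  by have := alpha_one P (inv k); rewrite inv_inv.
have og : one g = one (inv k) by rewrite (one_t P) (one_inv P) e.
have okg : one (comp k g) = one k by rewrite (one_t P) tgt_comp // -(one_t P).
have yk : a * one g * one (inv k) = a * one g by rewrite -og -mulrA oi.
have ab : forall B', alpha (inv g) (a * one g) * B' * one (inv g) = alpha (inv g) (a * one g) * B'.
  move=> B'; apply: in_mulr => //; apply: (alpha_in P (g := inv g)).
  by rewrite inv_inv -mulrA oi.
rewrite mul1r ak -{1}og oc okg -[a * one g * one g]mulrA oi.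
rewrite (alpha_in P yk).
have r1 : alpha k (alpha g (alpha (inv g) (a * one g) * (B * one h))) =
          alpha (comp k g) (alpha (inv g) (a * one g) * (B * one h)).
  apply: (alpha_compE P) => //.
  by rewrite -og (alpha_in P) // ab.
have r2 : alpha (comp (inv g) (inv k)) (alpha k (a * one g)) = alpha (inv g) (a * one g).
  rewrite (alpha_compE P) ?comp_invs //.
  - by rewrite src_comp ?src_inv ?tgt_inv.
  - by rewrite (one_inv P) src_comp ?src_inv ?tgt_inv // -(one_t P) (alpha_in P yk).
by rewrite r1 inv_comp // (alpha_in P yk) r2.
Qed.

Lemma Fsel_in (G : groupoid) (R : pzRingType) (one : mor G -> R) (alpha : mor G -> R -> R)
  (P : global_action one alpha) (g0 h0 g h : mor G) (a b : R) :
  Fsel g0 h0 (Fpsi one alpha) g a h b * one (idm (tgt g0)) =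
  Fsel g0 h0 (Fpsi one alpha) g a h b.
Proof.
have P' := P; case: P' => [[oi oc _ _ _ _ _ _ _ _] _].
rewrite /Fsel /Fpsi; case: andP => [[/eqP -> _]|]; last by rewrite mul0r.
case: ifP => _; last by rewrite mul0r.
rewrite -(one_t P); apply: (alpha_in P); apply: in_mulr => //.
apply: (alpha_in P (g := inv g0)).
by rewrite inv_inv -mulrA oi.
Qed.

Lemma left_transport (G : groupoid) (R : pzRingType) (one : mor G -> R) (alpha : mor G -> R -> R)
  (P : global_action one alpha) (k g0 h0 : mor G) (t : tensor G R) :
  src k = tgt g0 ->
  evalT one (Fsel (comp k g0) h0 (Fpsi one alpha))
     [seq (mulS one alpha [:: (k, 1)] p.1, p.2) | p <- t]
  = alpha k (evalT one (Fsel g0 h0 (Fpsi one alpha)) t).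
Proof.
move=> e0.
have kin : forall g a h b, Fsel g0 h0 (Fpsi one alpha) g a h b * one (inv k) =
                           Fsel g0 h0 (Fpsi one alpha) g a h b.
  by move=> g a h b; rewrite (one_inv P) e0 (Fsel_in P).
rewrite /evalT big_map (alpha_sum P); last first.
  by move=> p; rewrite /evalS2; apply: sum_in => q; apply: sum_in => q'; apply: kin.
apply: eq_bigr => p _ /=.
rewrite /evalS2 (alpha_sum P); last by move=> q; apply: sum_in => q'; apply: kin.
rewrite /mulS /= cats0 big_map big_filter big_mkcond /=.
apply: eq_bigr => q _.
rewrite (alpha_sum P) //.
case: eqP => e.
  by apply: eq_bigr => q' _; rewrite Fsel_point.
rewrite big1 // => q' _; rewrite /Fsel.
case: ifP => [/andP [/eqP E _]|_]; last by rewrite (alpha0 P).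
by case: e; rewrite E.
Qed.


Definition Lt (G : groupoid) (R : pzRingType) (t : tensor G R) : seq (mor G) :=
  flatten [seq [seq q.1 | q <- p.1] | p <- t].

Lemma Fsel_support (G : groupoid) (R : pzRingType) (one : mor G -> R) (M : zmodType)
  (F : mor G -> R -> mor G -> R -> M) (g0 h0 : mor G) (t : tensor G R) :
  evalT one (Fsel g0 h0 F) t != 0 -> g0 \in Lt t.
Proof.
apply: contraR => ng.
rewrite /evalT big1_seq //= => p pin.
rewrite /evalS2 big1_seq //= => q qin.
rewrite big1 // => q' _; rewrite /Fsel.
case: ifP => // /andP [/eqP E _]; case/negP: ng.
apply/flatten_mapP; exists p => //; apply/mapP; exists q => //.
Qed.

Definition Ut (G : groupoid) (R : pzRingType) (t : tensor G R) : seq (mor G * mor G) :=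
  undup (flatten [seq flatten [seq [seq (q.1, q'.1) | q' <- p.2] | q <- p.1] | p <- t]).

Lemma decomp (G : groupoid) (R : pzRingType) (one : mor G -> R) (M : zmodType)
  (F : mor G -> R -> mor G -> R -> M) (t : tensor G R) :
  evalT one F t = \sum_(u <- Ut t) evalT one (Fsel u.1 u.2 F) t.
Proof.
symmetry; rewrite /evalT exchange_big; apply: eq_big_seq => p pin.
rewrite /evalS2 exchange_big; apply: eq_big_seq => q qin.
rewrite exchange_big; apply: eq_big_seq => q' q'in /=.
rewrite /Fsel -big_mkcond /=.
rewrite (eq_bigl (fun u => u == (q.1, q'.1))); last first.
  by move=> [g h]; rewrite /= xpair_eqE (eq_sym g) (eq_sym h).
apply: (@sum_pred1_seq _ _ _ _ (fun=> _)); first exact: undup_uniq.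
rewrite mem_undup.
apply/flatten_mapP; exists p => //; apply/flatten_mapP; exists q => //.
by apply/mapP; exists q'.
Qed.

Definition Fm (G : groupoid) (R : pzRingType) (one : mor G -> R) (alpha : mor G -> R -> R)
  (f : obj G) : mor G -> R -> mor G -> R -> R :=
  fun g a h b => (if comp g h == idm f then Fpsi one alpha g a h b else 0) * one (idm f).

Lemma coef_multT (G : groupoid) (R : pzRingType) (one : mor G -> R) (alpha : mor G -> R -> R)
  (P : global_action one alpha) (t : tensor G R) (f : obj G) :
  coefS one (multT one alpha t) (idm f) = evalT one (Fm one alpha f) t.
Proof.
have P' := P; case: P' => [[oi oc _ _ _ _ _ _ _ _] _].
rewrite /coefS /multT big_flatten big_map /evalT; apply: eq_bigr => p _.
rewrite /mulS big_flatten big_map /evalS2; apply: eq_bigr => q _.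
rewrite big_map big_filter_cond /= big_mkcond; apply: eq_bigr => q' _ /=.
rewrite /Fm /Fpsi andbC.
case: eqP => _ /=; last by rewrite mul0r.
case: ifP => _ /=; last by rewrite mul0r.
by rewrite -[q.2 * one q.1 * one q.1]mulrA oi -[q'.2 * one q'.1 * one q'.1]mulrA oi.
Qed.

Lemma coef_oneS (G : groupoid) (R : pzRingType) (one : mor G -> R) (f : obj G) :
  coefS one (oneS G R) (idm f) = one (idm f).
Proof.
rewrite /coefS /oneS big_map.
rewrite (eq_bigl (fun e => e == f)); last first.
  move=> e /=; apply/eqP/eqP => [E|-> //].
  by rewrite -(src_idm e) E src_idm.
by rewrite (@sum_pred1_seq _ _ _ _ (fun=> _)) ?enum_uniq ?mem_enum // mul1r.
Qed.

Lemma evalT_mulr (G : groupoid) (R : pzRingType) (one : mor G -> R)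
  (F : mor G -> R -> mor G -> R -> R) (K : R) (t : tensor G R) :
  evalT one (fun g a h b => F g a h b * K) t = evalT one F t * K.
Proof.
rewrite /evalT big_distrl; apply: eq_bigr => p _.
rewrite /evalS2 big_distrl; apply: eq_bigr => q _.
by rewrite big_distrl.
Qed.

Lemma Fsel_Fm (G : groupoid) (R : pzRingType) (one : mor G -> R) (alpha : mor G -> R -> R)
  (f : obj G) (u : mor G * mor G) (t : tensor G R) :
  evalT one (Fsel u.1 u.2 (Fm one alpha f)) t =
  evalT one (Fsel u.1 u.2 (Fpsi one alpha)) t *
    ((if comp u.1 u.2 == idm f then 1 else 0) * one (idm f)).
Proof.
rewrite -evalT_mulr /evalT; apply: eq_bigr => p _; rewrite /evalS2.
apply: eq_bigr => q _; apply: eq_bigr => q' _.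
rewrite /Fsel /Fm; case: andP => [[/eqP -> /eqP ->]|_]; last by rewrite mul0r.
by case: ifP => _; rewrite ?mul1r ?mul0r ?mulr0 ?mulrA ?mulr1.
Qed.

Unset Implicit Arguments.

Theorem proposition4p1 (G : groupoid) (R : pzRingType)
    (one : mor G -> R) (alpha : mor G -> R -> R) :
  connected G ->
  direct_sum_decomp one ->
  (forall e : obj G, exists a : R, inI (one (idm e)) a /\ a <> 0) ->
  global_action one alpha ->
  separable_ext one alpha ->
  finite_groupoid G.
Proof.
move=> conn _ nz P [t [m1 cent]].
have P' := P; case: P' => [[oi oc _ _ _ _ ainj _ _ _] _].
case: (pickP (fun _ : obj G => true)) => [f _ | none]; last first.
  by exists [::] => g; have := none (src g).
have Ef : one (idm f) != 0.
  case: (nz f) => a [[b ->] an0]; apply/eqP => E; apply: an0; by rewrite E mulr0.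
have mt : evalT one (Fm one alpha f) t != 0 by rewrite -coef_multT // m1 coef_oneS.
have [u uin Pu] : exists2 u, u \in Ut t & evalT one (Fsel u.1 u.2 (Fpsi one alpha)) t != 0.
  move: mt; rewrite decomp => mt.
  case: (boolP (has (fun u => evalT one (Fsel u.1 u.2 (Fpsi one alpha)) t != 0) (Ut t))).
    by move/hasP.
  move/hasPn => H; case/negP: mt; rewrite big1_seq // => u /= uin.
  by rewrite Fsel_Fm; move/negPn/eqP: (H u uin) ->; rewrite mul0r.
set g0 := u.1; set h0 := u.2.
have Phin : evalT one (Fsel g0 h0 (Fpsi one alpha)) t * one (idm (tgt g0)) =
            evalT one (Fsel g0 h0 (Fpsi one alpha)) t.
  rewrite /evalT; apply: sum_in => p; apply: sum_in => q; apply: sum_in => q'.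
  exact: (Fsel_in P).
have S0P : forall k, src k = tgt g0 -> k \in [seq comp x (inv g0) | x <- Lt t].
  move=> k ek.
  have nzk : evalT one (Fsel (comp k g0) h0 (Fpsi one alpha))
      [seq (p.1, mulS one alpha p.2 [:: (k, 1)]) | p <- t] != 0.
    rewrite -(cent [:: (k, 1)] R _ (balanced_Fsel P _ _)) (left_transport P) //.
    apply/eqP => E; move/eqP: Pu; apply.
    apply: (ainj k); rewrite ?E ?(alpha0 P) //; apply: inI_of.
      by rewrite (one_inv P) ek.
    by rewrite mul0r.
  have := Fsel_support nzk.
  have -> : Lt [seq (p.1, mulS one alpha p.2 [:: (k, 1)]) | p <- t] = Lt t.
    by rewrite /Lt -map_comp.
  move=> kin; apply/mapP; exists (comp k g0) => //.
  by rewrite comp_inv_r.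
set S0 := [seq comp x (inv g0) | x <- Lt t].
exists [seq comp x (inv y) | x <- S0, y <- S0] => m.
case: (conn (tgt g0) (src m)) => j [sj tj].
rewrite -(comp_inv_r (k := m) (g := j)) //.
apply: allpairs_f; apply: S0P => //.
by rewrite src_comp.
Qed.
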